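(* Let $X \subset \mathbb{R}^d$ be a finite set of $n = |X| \geq 2$ points, and let $x^*, y^* \in X$, $x^* \neq y^*$, be a pair of distinct points minimizing $\|x - y\|^2$ over all pairs of distinct points of $X$. Let $\kappa_\sigma(x,y) = \exp\left(-\|x-y\|^2/\sigma\right)$ be the RBF kernel with bandwidth $\sigma > 0$, and suppose \[ \sigma \leq \frac{\|x^* - y^*\|^2}{\log(3n)} . \] Then, for any $k$ and any $k$-partition $\pi_1,\dots,\pi_k$ of $X$ used as the current partition, {\tt Kernel $k$-means} run with $\kappa_\sigma$ makes no cluster reassignments; that is, for every $x \in X$, if $x \in \pi_j$ then $\|\phi(x) - m_j\|^2 \leq \|\phi(x) - m_i\|^2$ for all $i = 1,\dots,k$.
   Context: Norms are Euclidean and $\log$ is the natural logarithm. A $k$-partition of $X$ is a collection of $k$ non-empty, pairwise disjoint subsets $\pi_1,\dots,\pi_k$ (clusters) whose union is $X$; $n_i = |\pi_i|$. For a positive definite kernel $\kappa$ with implicit feature map $\phi$, the feature-space centroid of cluster $\pi_i$ is $m_i = \frac{1}{n_i}\sum_{x\in\pi_i}\phi(x)$, and the squared feature-space distance is computed as \[ \|\phi(x) - m_i\|^2 = \kappa(x,x) - \frac{2\sum_{y\in\pi_i}\kappa(x,y)}{n_i} + \frac{\sum_{y,z\in\pi_i}\kappa(y,z)}{n_i^2}. \] {\tt Kernel $k$-means} is Lloyd's algorithm using these distances: starting from a $k$-partition, it repeatedly reassigns each point to the cluster whose feature-space centroid is closest to it (a point is moved out of its current cluster only if some other cluster's centroid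 is strictly closer), until no point changes cluster. *)

(* Defs.v *)
From HB Require Import structures.
From mathcomp Require Import all_boot all_order all_algebra.
From mathcomp Require Import reals sequences exp.
Set Implicit Arguments. Unset Strict Implicit. Unset Printing Implicit Defensive.
Import Order.TTheory GRing.Theory Num.Theory.
Local Open Scope ring_scope.

Definition sqdist (R : realType) (d : nat) (x y : 'rV[R]_d) : R :=
  \sum_(j < d) (x 0 j - y 0 j) ^+ 2.

Definition rbf (R : realType) (d : nat) (sigma : R) (x y : 'rV[R]_d) : R :=
  expR (- sqdist x y / sigma).

Definition cluster (n k : nat) (P : 'I_n -> 'I_k) (i : 'I_k) : {set 'I_n} :=
  [set b | P b == i].

(* Squared feature-space distance ||phi(x_a) - m_C||^2, computed via kernel. *)
Definition fdist (R : realType) (d n : nat) (kappa : 'rV[R]_d -> 'rV[R]_d -> R)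
    (p : 'I_n -> 'rV[R]_d) (C : {set 'I_n}) (a : 'I_n) : R :=
  kappa (p a) (p a)
  - 2 * (\sum_(b in C) kappa (p a) (p b)) / (#|C|%:R)
  + (\sum_(b in C) \sum_(c in C) kappa (p b) (p c)) / ((#|C|%:R) ^+ 2).

(* Main.v *)
Require Import Defs.
From HB Require Import structures.
From mathcomp Require Import all_boot all_order all_algebra.
From mathcomp Require Import reals sequences exp.
From mathcomp Require Import ring lra.
Import Order.TTheory GRing.Theory Num.Theory.
Local Open Scope ring_scope.

Theorem theorem1 (R : realType) (d n k : nat) (p : 'I_n -> 'rV[R]_d)
  (p_inj : injective p) (hn : (2 <= n)%N)
  (xs ys : 'I_n) (hxy : xs != ys)
  (hmin : forall a b : 'I_n, a != b -> sqdist (p xs) (p ys) <= sqdist (p a) (p b))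
  (sigma : R) (hsig0 : 0 < sigma)
  (hsig : sigma <= sqdist (p xs) (p ys) / ln (3 * n%:R))
  (P : 'I_n -> 'I_k) (hP : forall i : 'I_k, exists a : 'I_n, P a = i) :
  forall (a : 'I_n) (i : 'I_k),
    fdist (rbf sigma) p (cluster P (P a)) a <= fdist (rbf sigma) p (cluster P i) a.
Proof.
move=> a i.
set K := fun b c => rbf sigma (p b) (p c).
set N : R := 3 * n%:R.
have Npos : 6 <= N.
  rewrite /N; have : (2%:R <= n%:R :> R) by rewrite ler_nat.
  move=> h; lra.
set e := N^-1.
have e0 : 0 < e by rewrite /e invr_gt0; lra.
have Kdiag b : K b b = 1.
  by rewrite /K /rbf /sqdist big1 ?oppr0 ?mul0r ?expR0 // => j _; rewrite subrr expr0n.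
have K0 b c : 0 <= K b c by apply: expR_ge0.
have Koff b c : b != c -> K b c <= e.
  move=> bc; rewrite /K /rbf /e /N.
  have lnp : 0 < ln N by apply: ln_gt0; lra.
  have h1 : ln N <= sqdist (p b) (p c) / sigma.
    rewrite ler_pdivlMr //; rewrite ler_pdivlMr // in hsig.
    by apply: le_trans (hmin _ _ bc); rewrite mulrC.
  have -> : N^-1 = expR (- ln N) by rewrite expRN lnK // posrE; lra.
  by rewrite ler_expR mulNr lerN2.
have Kle1 b c : K b c <= 1.
  case: (eqVneq b c) => [->|bc]; first by rewrite Kdiag.
  apply: le_trans (Koff _ _ bc) _; rewrite /e invf_le1; lra.
have emul : 3 * e * n%:R = 1.
  rewrite /e /N; field; rewrite pnatr_eq0 -lt0n; exact: leq_trans hn.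
have other (C : {set 'I_n}) : a \notin C -> 1 - 2 * e <= fdist (rbf sigma) p C a.
  move=> aC; rewrite /fdist -/(K a a) Kdiag.
  set m : R := #|C|%:R.
  have m0 : 0 <= m by rewrite /m ler0n.
  have hs : (\sum_(b in C) rbf sigma (p a) (p b)) <= m * e.
    apply: le_trans (ler_sum _ (G := fun _ => e) _) _.
      move=> b bC; apply: Koff; apply/eqP => ab; by rewrite ab bC in aC.
    by rewrite sumr_const -mulr_natr mulrC.
  have hT : 0 <= \sum_(b in C) \sum_(c in C) rbf sigma (p b) (p c).
    by apply: sumr_ge0 => b _; apply: sumr_ge0 => c _; apply: K0.
  have hS : (\sum_(b in C) rbf sigma (p a) (p b)) / m <= e.
    have [->|mn0] := eqVneq m 0; first by rewrite invr0 mulr0; lra.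
    by rewrite ler_pdivrMr ?lt_def ?mn0 // mulrC.
  have : 0 <= (\sum_(b in C) \sum_(c in C) rbf sigma (p b) (p c)) / m ^+ 2.
    by apply: divr_ge0 => //; apply: exprn_ge0.
  move: hS; rewrite -!mulrA; lra.
have own (C : {set 'I_n}) : a \in C -> fdist (rbf sigma) p C a <= 1 - (#|C|%:R)^-1 + e.
  move=> aC; rewrite /fdist -/(K a a) Kdiag.
  set m : R := #|C|%:R.
  have m1 : 1 <= m by rewrite /m ler1n card_gt0; apply/set0Pn; exists a.
  have hS : 1 <= \sum_(b in C) rbf sigma (p a) (p b).
    rewrite (bigD1 a) //= -/(K a a) Kdiag -lerBlDl subrr.
    by apply: sumr_ge0 => c _; apply: K0.
  have hT : \sum_(b in C) \sum_(c in C) rbf sigma (p b) (p c) <= m * (1 + m * e).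
    apply: le_trans (ler_sum _ (G := fun _ => 1 + m * e) _) _; last first.
      by rewrite sumr_const -mulr_natr mulrC.
    move=> b bC; rewrite (bigD1 b) //= -/(K b b) Kdiag lerD2l.
    have he : \sum_(c in C) e = e + \sum_(c in C | c != b) e by rewrite (bigD1 b).
    have : \sum_(c in C) e = m * e by rewrite sumr_const -mulr_natr mulrC.
    move=> h2; apply: le_trans (ler_sum _ (G := fun _ => e) _) _.
      by move=> c /andP[_ cb]; apply: Koff; rewrite eq_sym.
    lra.
  set T := (\sum_(b in C) \sum_(c in C) _) in hT *.
  set S := (\sum_(b in C) rbf sigma (p a) (p b)) in hS *.
  have mp : 0 < m by lra.
  have u0 : 0 < m^-1 by rewrite invr_gt0.
  have mu : m * m^-1 = 1 by rewrite mulfV // gt_eqF.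
  have -> : T / m ^+ 2 = T * m^-1 * m^-1 by rewrite expr2 invfM mulrA.
  have h3 : T * m^-1 * m^-1 <= m * (1 + m * e) * m^-1 * m^-1.
    by rewrite ler_pM2r // ler_pM2r.
  have E : m * (1 + m * e) * m^-1 * m^-1 = m^-1 + e.
    by field; rewrite gt_eqF.
  rewrite E in h3.
  have : S * m^-1 >= m^-1 by rewrite -{1}(mul1r m^-1) ler_pM2r.
  lra.
have [eqi|nei] := eqVneq i (P a); first by rewrite eqi.
have aP : a \in cluster P (P a) by rewrite inE.
have aN : a \notin cluster P i by rewrite inE eq_sym.
apply: le_trans (own _ aP) _; apply: le_trans (other _ aN).
have : n%:R^-1 <= (#|cluster P (P a)|%:R)^-1 :> R.
  rewrite lef_pV2 ?posrE ?ltr0n ?card_gt0; last by apply/set0Pn; exists a.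
  - rewrite ler_nat; apply: leq_trans (max_card _) _; by rewrite card_ord.
  - exact: leq_trans hn.
have : 3 * e = n%:R^-1.
  rewrite /e /N; field; rewrite pnatr_eq0 -lt0n; exact: leq_trans hn.
lra.
Qed.
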